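(* Suppose $f$ is convex, Assumptions 1 and 2 hold, $H_k\succeq0$ for all $k$, and there is $\eta\in[0,1)$ such that every $d^k$ satisfies the $\eta$-inexactness condition for $Q_k=Q^{x^k}_{H_k}$. Then for Algorithm 1: (1) For every $k$ with $F(x^k)-F^*\ge (x^k-P_\Omega(x^k))^TH_k(x^k-P_\Omega(x^k))$, $$F(x^{k+1})-F^*\le\left(1-\frac{(1-\eta)\gamma\alpha_k}{2}\right)(F(x^k)-F^* ).$$ (2) Let $k_0$ be the smallest index $k$ with $F(x^k)-F^*<MR_0^2$. Then for all $k\ge k_0$, $$F(x^k)-F^*\le\frac{2MR_0^2}{\gamma(1-\eta)\sum_{t=k_0}^{k-1}\alpha_t+2}.$$ If there exists $\bar\alpha>0$ with $\alpha_k\ge\bar\alpha$ for all $k$, then $$k_0\le\max\left\{0,\ 1+\frac{2}{\gamma(1-\eta)\bar\alpha}\log\frac{F(x^0)-F^*}{MR_0^2}\right\}.$$ For Algorithm 2, if the initial matrices satisfy $m_0I\preceq H_k^0\preceq M_0I$ for all $k$ (with $M_0>0$, $m_0\le M_0$, and $m_0>0$ for Variant 1) and the final $H_k\succeq0$, the same conclusions hold with $\alpha_k\equiv1$, $\bar\alpha=1$, and $M$ replaced by $\tilde M_1(\eta)$ for Variant 1 and by $\tilde M_2(\eta)$ for Variant 2.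
   Context: Problem setting: $F(x)=f(x)+\psi(x)$ on $\mathbb{R}^n$, $F^*=\inf F$, $\Omega=\{x:F(x)=F^*\}$, $P_\Omega$ the Euclidean projection onto $\Omega$, $\|\cdot\|$ the Euclidean / spectral norm. Assumption 1: $f$ is differentiable with $L$-Lipschitz continuous gradient ($L>0$); $\psi:\mathbb{R}^n\to\mathbb{R}\cup\{+\infty\}$ is convex, proper and closed; $F$ is bounded below; $\Omega$ is nonempty. For $x\in\mathbb{R}^n$ and symmetric $H$, $Q^x_H(d)\coloneqq\nabla f(x)^Td+\frac12d^THd+\psi(x+d)-\psi(x)$, $Q^*=\inf_dQ^x_H(d)$; $d$ satisfies the $\eta$-inexactness condition if $Q^x_H(d)\le(1-\eta)Q^*$. Algorithm 1: given $\beta,\gamma\in(0,1)$, $x^0$, fixed $\eta\in[0,1)$; for $k=0,1,\dots$: choose symmetric $H_k$ with $Q_k\coloneqq Q^{x^k}_{H_k}$ strongly convex; compute $d^k$ satisfying the $\eta$-inexactness condition for $Q_k$; let $\Delta_k=\nabla f(x^k)^Td^k+\psi(x^k+d^k)-\psi(x^k)$; let $\alpha_k=\beta^i$ for the smallest nonnegative integer $i$ with $F(x^k+\alpha_kd^k)\le F(x^k)+\alpha_k\gamma\Delta_k$; set $x^{k+1}=x^k+\alpha_kd^k$. Algorithm 2: given $\beta\in(0,1)$, $\gamma\in(0,1]$, $x^0$, fixed $\eta\in[0,1)$; for each $k$: choose symmetric $H^0_k$ (in Variant 1, $H^0_k\succ0$); set $\alpha_k\leftarrow1$, $H_k\leftarrow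 H^0_k$, compute $d^k$ satisfying the $\eta$-inexactness condition for $Q^{x^k}_{H_k}$; while $F(x^k)-F(x^k+d^k)\ge-\gamma Q^{x^k}_{H_k}(d^k)\ge0$ fails: Variant 1 sets $\alpha_k\leftarrow\beta\alpha_k$, $H_k\leftarrow H^0_k/\alpha_k$; Variant 2 sets $H_k\leftarrow H^0_k+\alpha_k^{-1}I$, then $\alpha_k\leftarrow\beta\alpha_k$; then $d^k$ is recomputed satisfying the $\eta$-inexactness condition. Finally $x^{k+1}=x^k+d^k$; ''final $H_k$'' is the accepted matrix. Assumption 2: there exist finite $R_0,M>0$ with $\sup_{x:F(x)\le F(x^0)}\|x-P_\Omega(x)\|=R_0<\infty$ and $\|H_k\|\le M$ for all $k$. Constants: $\tilde M_2(\eta)\coloneqq M_0+\max\{1,\frac1\beta(\frac{L(1+\sqrt\eta)}{2-\gamma(1-\sqrt\eta)}-m_0)\}$, $\tilde M_1(\eta)\coloneqq M_0\max\{1,\frac{L(1+\sqrt\eta)}{\beta(2-\gamma(1-\sqrt\eta))m_0}\}$. *)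

(* Defs.v *)
From Stdlib Require Import Reals Lra.
From Stdlib Require Vectors.Fin.
Open Scope R_scope.

Definition vec (n : nat) := Fin.t n -> R.
Definition mat (n : nat) := Fin.t n -> Fin.t n -> R.

Fixpoint finsum (n : nat) : (Fin.t n -> R) -> R :=
  match n return (Fin.t n -> R) -> R with
  | O => fun _ => 0
  | S m => fun u => u Fin.F1 + finsum m (fun i => u (Fin.FS i))
  end.

Definition vadd {n} (u v : vec n) : vec n := fun i => u i + v i.
Definition vsub {n} (u v : vec n) : vec n := fun i => u i - v i.
Definition vscale {n} (a : R) (u : vec n) : vec n := fun i => a * u i.
Definition dot {n} (u v : vec n) : R := finsum n (fun i => u i * v i).
Definition vnorm {n} (u : vec n) : R := sqrt (dot u u).

Definition mv {n} (H : mat n) (v : vec n) : vec n := fun i => finsum n (fun j => H i j * v j).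
Definition quad {n} (H : mat n) (v : vec n) : R := dot v (mv H v).
Definition madd {n} (A B : mat n) : mat n := fun i j => A i j + B i j.
Definition mscale {n} (a : R) (A : mat n) : mat n := fun i j => a * A i j.
Definition ident (n : nat) : mat n := fun i j => if Fin.eq_dec i j then 1 else 0.

Definition symmetric {n} (H : mat n) : Prop := forall i j, H i j = H j i.
Definition psd {n} (H : mat n) : Prop := forall v, 0 <= quad H v.
Definition pd {n} (H : mat n) : Prop := forall v, v <> (fun _ => 0) -> 0 < quad H v.
Definition loewner_between {n} (m M : R) (H : mat n) : Prop :=
  forall v, m * dot v v <= quad H v /\ quad H v <= M * dot v v.
Definition spec_norm_le {n} (H : mat n) (M : R) : Prop :=
  forall v, vnorm (mv H v) <= M * vnorm v.

Definition is_glb (S : R -> Prop) (m : R) : Prop :=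
  (forall y, S y -> m <= y) /\ (forall b, (forall y, S y -> b <= y) -> b <= m).

(* sum_{t=m}^{m+len-1} a t *)
Fixpoint rsum (a : nat -> R) (m len : nat) : R :=
  match len with O => 0 | S l => rsum a m l + a (m + l)%nat end.

Definition has_gradient {n} (f : vec n -> R) (g : vec n -> vec n) : Prop :=
  forall x eps, 0 < eps -> exists delta, 0 < delta /\
    forall h, vnorm h < delta ->
      Rabs (f (vadd x h) - f x - dot (g x) h) <= eps * vnorm h.

Definition vconv {n} (xs : nat -> vec n) (x : vec n) : Prop :=
  Un_cv (fun j => vnorm (vsub (xs j) x)) 0.

Definition convex_fun {n} (f : vec n -> R) : Prop :=
  forall x y t, 0 <= t <= 1 ->
    f (vadd (vscale t x) (vscale (1 - t) y)) <= t * f x + (1 - t) * f y.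

(* An extended-valued function psi : R^n -> R ∪ {+oo} is represented by its
   effective domain dom and its (finite) values psi on dom; psi = +oo off dom. *)
Definition convex_set {n} (C : vec n -> Prop) : Prop :=
  forall x y t, C x -> C y -> 0 <= t <= 1 -> C (vadd (vscale t x) (vscale (1 - t) y)).

Definition ext_convex {n} (dom : vec n -> Prop) (psi : vec n -> R) : Prop :=
  convex_set dom /\
  forall x y t, dom x -> dom y -> 0 <= t <= 1 ->
    psi (vadd (vscale t x) (vscale (1 - t) y)) <= t * psi x + (1 - t) * psi y.

Definition ext_proper {n} (dom : vec n -> Prop) : Prop := exists x, dom x.

(* closed: the epigraph {(x,t) : x ∈ dom, psi x <= t} is closed *)
Definition ext_closed {n} (dom : vec n -> Prop) (psi : vec n -> R) : Prop :=
  forall (xs : nat -> vec n) (ts : nat -> R) x t,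
    (forall j, dom (xs j) /\ psi (xs j) <= ts j) ->
    vconv xs x -> Un_cv ts t -> dom x /\ psi x <= t.

Definition Fv {n} (f psi : vec n -> R) (x : vec n) : R := f x + psi x.

Definition Omega {n} (dom : vec n -> Prop) (f psi : vec n -> R) (Fs : R) (x : vec n) : Prop :=
  dom x /\ Fv f psi x = Fs.

Definition is_projection {n} (C : vec n -> Prop) (P : vec n -> vec n) : Prop :=
  forall x, C (P x) /\ forall q, C q -> vnorm (vsub x (P x)) <= vnorm (vsub x q).

Definition assumption1 {n} (f : vec n -> R) (g : vec n -> vec n) (L : R)
    (dom : vec n -> Prop) (psi : vec n -> R) (Fs : R) : Prop :=
  0 < L /\ has_gradient f g /\
  (forall x y, vnorm (vsub (g x) (g y)) <= L * vnorm (vsub x y)) /\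
  ext_convex dom psi /\ ext_proper dom /\ ext_closed dom psi /\
  (exists b, forall x, dom x -> b <= Fv f psi x) /\
  is_glb (fun r => exists x, dom x /\ r = Fv f psi x) Fs /\
  (exists x, Omega dom f psi Fs x).

Definition assumption2 {n} (dom : vec n -> Prop) (f psi : vec n -> R) (P : vec n -> vec n)
    (x0 : vec n) (H : nat -> mat n) (R0 M : R) : Prop :=
  0 < R0 /\ 0 < M /\
  is_lub (fun r => exists y, dom y /\ Fv f psi y <= Fv f psi x0 /\ r = vnorm (vsub y (P y))) R0 /\
  (forall k, spec_norm_le (H k) M).

(* finite part of Q^x_H(d) = grad f(x)^T d + 1/2 d^T H d + psi(x+d) - psi(x);
   Q^x_H(d) = +oo iff x+d ∉ dom *)
Definition Qv {n} (g : vec n -> vec n) (psi : vec n -> R) (x : vec n) (H : mat n) (d : vec n) : R :=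
  dot (g x) d + / 2 * quad H d + psi (vadd x d) - psi x.

Definition Q_strongly_convex {n} (dom : vec n -> Prop) (g : vec n -> vec n) (psi : vec n -> R)
    (x : vec n) (H : mat n) : Prop :=
  exists mu, 0 < mu /\ forall d1 d2 t, dom (vadd x d1) -> dom (vadd x d2) -> 0 <= t <= 1 ->
    Qv g psi x H (vadd (vscale t d1) (vscale (1 - t) d2))
      <= t * Qv g psi x H d1 + (1 - t) * Qv g psi x H d2
         - mu / 2 * t * (1 - t) * (vnorm (vsub d1 d2)) ^ 2.

Definition inexact {n} (dom : vec n -> Prop) (g : vec n -> vec n) (psi : vec n -> R)
    (x : vec n) (H : mat n) (eta : R) (d : vec n) : Prop :=
  dom (vadd x d) /\
  exists Qs, is_glb (fun r => exists e, dom (vadd x e) /\ r = Qv g psi x H e) Qs /\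
    Qv g psi x H d <= (1 - eta) * Qs.

Definition armijo {n} (dom : vec n -> Prop) (f psi : vec n -> R) (g : vec n -> vec n)
    (beta gamma : R) (x d : vec n) (i : nat) : Prop :=
  let a := beta ^ i in
  let Delta := dot (g x) d + psi (vadd x d) - psi x in
  dom (vadd x (vscale a d)) /\
  Fv f psi (vadd x (vscale a d)) <= Fv f psi x + a * gamma * Delta.

Definition alg1_run {n} (dom : vec n -> Prop) (f psi : vec n -> R) (g : vec n -> vec n)
    (beta gamma eta : R) (x : nat -> vec n) (H : nat -> mat n) (d : nat -> vec n)
    (alpha : nat -> R) : Prop :=
  0 < beta < 1 /\ 0 < gamma < 1 /\ 0 <= eta < 1 /\ dom (x O) /\
  forall k,
    symmetric (H k) /\ Q_strongly_convex dom g psi (x k) (H k) /\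
    inexact dom g psi (x k) (H k) eta (d k) /\
    (exists i : nat, alpha k = beta ^ i /\ armijo dom f psi g beta gamma (x k) (d k) i /\
        forall j, (j < i)%nat -> ~ armijo dom f psi g beta gamma (x k) (d k) j) /\
    x (S k) = vadd (x k) (vscale (alpha k) (d k)).

(* matrix used at the i-th trial (after i failed acceptance tests) *)
Definition trialH_v1 {n} (beta : R) (H0 : mat n) (i : nat) : mat n :=
  mscale (/ beta ^ i) H0.                       (* H0 / alpha, alpha = beta^i *)
Definition trialH_v2 {n} (beta : R) (H0 : mat n) (i : nat) : mat n :=
  match i with
  | O => H0
  | S j => madd H0 (mscale (/ beta ^ j) (ident n))  (* H0 + alpha^{-1} I, alpha = beta^j *)
  end.

Definition accept {n} (f psi : vec n -> R) (g : vec n -> vec n) (gamma : R)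
    (x : vec n) (H : mat n) (d : vec n) : Prop :=
  Fv f psi x - Fv f psi (vadd x d) >= - gamma * Qv g psi x H d /\
  - gamma * Qv g psi x H d >= 0.

Definition alg2_run {n} (trial : R -> mat n -> nat -> mat n) (variant1 : bool)
    (dom : vec n -> Prop) (f psi : vec n -> R) (g : vec n -> vec n)
    (beta gamma eta : R) (x : nat -> vec n) (H0 H : nat -> mat n) (d : nat -> vec n) : Prop :=
  0 < beta < 1 /\ 0 < gamma <= 1 /\ 0 <= eta < 1 /\ dom (x O) /\
  forall k,
    symmetric (H0 k) /\ (variant1 = true -> pd (H0 k)) /\
    exists (ik : nat) (dt : nat -> vec n),
      (forall i, (i <= ik)%nat -> inexact dom g psi (x k) (trial beta (H0 k) i) eta (dt i)) /\
      (forall i, (i < ik)%nat -> ~ accept f psi g gamma (x k) (trial beta (H0 k) i) (dt i)) /\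
      accept f psi g gamma (x k) (trial beta (H0 k) ik) (dt ik) /\
      H k = trial beta (H0 k) ik /\ d k = dt ik /\
      x (S k) = vadd (x k) (d k).

Definition Mtilde1 (M0 m0 L beta gamma eta : R) : R :=
  M0 * Rmax 1 (L * (1 + sqrt eta) / (beta * (2 - gamma * (1 - sqrt eta)) * m0)).
Definition Mtilde2 (M0 m0 L beta gamma eta : R) : R :=
  M0 + Rmax 1 (/ beta * (L * (1 + sqrt eta) / (2 - gamma * (1 - sqrt eta)) - m0)).

Definition conclusions {n} (f psi : vec n -> R) (P : vec n -> vec n) (Fs R0 M gamma eta : R)
    (x : nat -> vec n) (H : nat -> mat n) (alpha : nat -> R) : Prop :=
  let F := Fv f psi in
  (forall k, quad (H k) (vsub (x k) (P (x k))) <= F (x k) - Fs ->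
     F (x (S k)) - Fs <= (1 - (1 - eta) * gamma * alpha k / 2) * (F (x k) - Fs)) /\
  (forall k0 : nat, F (x k0) - Fs < M * R0 ^ 2 ->
     (forall j, (j < k0)%nat -> ~ (F (x j) - Fs < M * R0 ^ 2)) ->
     (forall k, (k0 <= k)%nat ->
        F (x k) - Fs <= 2 * M * R0 ^ 2 / (gamma * (1 - eta) * rsum alpha k0 (k - k0) + 2)) /\
     (forall abar, 0 < abar -> (forall k, abar <= alpha k) ->
        INR k0 <= Rmax 0 (1 + 2 / (gamma * (1 - eta) * abar)
                              * ln ((F (x O) - Fs) / (M * R0 ^ 2))))).

(* Main.v *)
Require Import Defs.
From Stdlib Require Import Reals Lra Lia.
From Stdlib Require Import FunctionalExtensionality.
From Stdlib Require Vectors.Fin.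
Open Scope R_scope.

Lemma finsum_add n (u v : Fin.t n -> R) :
  finsum n (fun i => u i + v i) = finsum n u + finsum n v.
Proof. induction n; simpl; [lra|]. rewrite (IHn (fun i => u (Fin.FS i)) (fun i => v (Fin.FS i))). ring. Qed.

Lemma finsum_scale n a (u : Fin.t n -> R) :
  finsum n (fun i => a * u i) = a * finsum n u.
Proof. induction n; simpl; [lra|]. rewrite (IHn (fun i => u (Fin.FS i))). ring. Qed.

Lemma finsum_ext n (u v : Fin.t n -> R) : (forall i, u i = v i) -> finsum n u = finsum n v.
Proof. intro H. f_equal. apply functional_extensionality. exact H. Qed.

Lemma finsum_nonneg n (u : Fin.t n -> R) : (forall i, 0 <= u i) -> 0 <= finsum n u.
Proof. induction n; simpl; intro H; [lra|]. specialize (IHn (fun i => u (Fin.FS i))).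
  assert (0 <= u Fin.F1) by apply H. assert (0 <= finsum n (fun i => u (Fin.FS i))) by (apply IHn; intro; apply H). lra. Qed.

Lemma finsum_zero n : finsum n (fun _ => 0) = 0.
Proof. induction n; simpl; [lra|]. rewrite IHn. ring. Qed.

Lemma finsum_delta n (u : Fin.t n -> R) i :
  finsum n (fun j => (if Fin.eq_dec i j then 1 else 0) * u j) = u i.
Proof.
  induction n as [|n IH]; [inversion i|].
  revert i. intro i. pattern i. apply Fin.caseS'.
  - simpl. destruct (Fin.eq_dec Fin.F1 Fin.F1) as [_|C]; [|congruence].
    rewrite (finsum_ext _ _ (fun _ => 0)).
    + rewrite finsum_zero. ring.
    + intro j. destruct (Fin.eq_dec Fin.F1 (Fin.FS j)) as [E|_]; [inversion E|ring].
  - intro p. simpl. destruct (Fin.eq_dec (Fin.FS p) Fin.F1) as [E|_]; [inversion E|].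
    rewrite <- (IH (fun j => u (Fin.FS j)) p). transitivity (0 + finsum n (fun j => (if Fin.eq_dec p j then 1 else 0) * u (Fin.FS j))); [|ring].
    f_equal; [ring|]. apply finsum_ext. intro j.
    destruct (Fin.eq_dec (Fin.FS p) (Fin.FS j)) as [E|E]; destruct (Fin.eq_dec p j) as [E'|E']; try ring.
    all: first [ apply Fin.FS_inj in E; congruence | subst; congruence ].
Qed.

Ltac vext := apply functional_extensionality; intro; unfold vadd, vsub, vscale; ring.

Lemma dot_comm n (u v : vec n) : dot u v = dot v u.
Proof. unfold dot. apply finsum_ext. intro; ring. Qed.
Lemma dot_addl n (u v w : vec n) : dot (vadd u v) w = dot u w + dot v w.
Proof. unfold dot, vadd. rewrite <- finsum_add. apply finsum_ext. intro; ring. Qed.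
Lemma dot_addr n (u v w : vec n) : dot w (vadd u v) = dot w u + dot w v.
Proof. unfold dot, vadd. rewrite <- finsum_add. apply finsum_ext. intro; ring. Qed.
Lemma dot_scalel n a (u w : vec n) : dot (vscale a u) w = a * dot u w.
Proof. unfold dot, vscale. rewrite <- finsum_scale. apply finsum_ext. intro; ring. Qed.
Lemma dot_scaler n a (u w : vec n) : dot w (vscale a u) = a * dot w u.
Proof. unfold dot, vscale. rewrite <- finsum_scale. apply finsum_ext. intro; ring. Qed.
Lemma dot_subl n (u v w : vec n) : dot (vsub u v) w = dot u w - dot v w.
Proof. replace (vsub u v) with (vadd u (vscale (-1) v)) by vext.
  rewrite dot_addl, dot_scalel. ring. Qed.
Lemma dot_nonneg n (u : vec n) : 0 <= dot u u.
Proof. unfold dot. apply finsum_nonneg. intro. apply Rle_0_sqr. Qed.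

Lemma mv_add n (H : mat n) u v : mv H (vadd u v) = vadd (mv H u) (mv H v).
Proof. apply functional_extensionality; intro i. unfold mv, vadd.
  rewrite <- finsum_add. apply finsum_ext. intro; ring. Qed.
Lemma mv_scale n (H : mat n) a u : mv H (vscale a u) = vscale a (mv H u).
Proof. apply functional_extensionality; intro i. unfold mv, vscale.
  rewrite <- finsum_scale. apply finsum_ext. intro; ring. Qed.

Lemma quad_scale n (H : mat n) a v : quad H (vscale a v) = a^2 * quad H v.
Proof. unfold quad. rewrite mv_scale, dot_scalel, dot_scaler. ring. Qed.
Lemma quad_madd n (A B : mat n) v : quad (madd A B) v = quad A v + quad B v.
Proof. unfold quad. rewrite <- dot_addr. f_equal. apply functional_extensionality; intro i.
  unfold mv, madd, vadd. rewrite <- finsum_add. apply finsum_ext. intro; ring. Qed.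
Lemma quad_mscale n a (A : mat n) v : quad (mscale a A) v = a * quad A v.
Proof. unfold quad. rewrite <- dot_scaler. f_equal. apply functional_extensionality; intro i.
  unfold mv, mscale, vscale. rewrite <- finsum_scale. apply finsum_ext. intro; ring. Qed.
Lemma quad_ident n v : quad (ident n) v = dot v v.
Proof. unfold quad. f_equal. apply functional_extensionality; intro i.
  unfold mv, ident. apply finsum_delta. Qed.

Lemma vnorm_nonneg n (u : vec n) : 0 <= vnorm u.
Proof. apply sqrt_pos. Qed.
Lemma vnorm_sq n (u : vec n) : vnorm u ^ 2 = dot u u.
Proof. unfold vnorm. simpl. rewrite Rmult_1_r. apply sqrt_sqrt, dot_nonneg. Qed.
Lemma vnorm_scale n a (u : vec n) : vnorm (vscale a u) = Rabs a * vnorm u.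
Proof. unfold vnorm. rewrite dot_scalel, dot_scaler, <- Rmult_assoc.
  rewrite sqrt_mult; [|apply Rle_0_sqr|apply dot_nonneg].
  f_equal. apply sqrt_Rsqr_abs. Qed.

Lemma cauchy_schwarz n (u v : vec n) : dot u v <= vnorm u * vnorm v.
Proof.
  assert (Hq : forall t, 0 <= dot u u + 2 * t * dot u v + t^2 * dot v v).
  { intro t. pose proof (dot_nonneg _ (vadd u (vscale t v))) as H.
    rewrite dot_addl, !dot_addr, !dot_scalel, !dot_scaler, (dot_comm _ v u) in H. nra. }
  set (A := dot u u) in *. set (B := dot v v) in *. set (C := dot u v) in *.
  assert (HA : 0 <= A) by apply dot_nonneg. assert (HB : 0 <= B) by apply dot_nonneg.
  destruct (Rle_dec C 0) as [Hc|Hc]. { pose proof (vnorm_nonneg _ u); pose proof (vnorm_nonneg _ v); nra. }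
  destruct (Req_dec B 0) as [HB0|HB0].
  { exfalso. specialize (Hq (-(A+1)/(2*C))). rewrite HB0 in Hq.
    replace (A + 2 * (- (A + 1) / (2 * C)) * C + (- (A + 1) / (2 * C)) ^ 2 * 0) with (-1) in Hq by (field; lra). lra. }
  specialize (Hq (- C / B)).
  assert (C * C <= A * B).
  { replace (A + 2 * (- C / B) * C + (- C / B) ^ 2 * B) with ((A * B - C * C) / B) in Hq by (field; lra).
    assert (0 < B) by lra.
    apply Rmult_le_compat_r with (r := B) in Hq; [|lra]. unfold Rdiv in Hq. rewrite Rmult_assoc, Rinv_l in Hq; lra. }
  unfold vnorm. fold A B. rewrite <- sqrt_mult by lra.
  rewrite <- (sqrt_square C) by lra. apply sqrt_le_1; nra.
Qed.

Lemma abs_le_between z e : Rabs z <= e -> -e <= z <= e.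
Proof. intro H. pose proof (Rle_abs z). pose proof (Rle_abs (-z)). rewrite Rabs_Ropp in *. lra. Qed.

Lemma grad_ineq n (f : vec n -> R) g : has_gradient f g -> convex_fun f ->
  forall x y, dot (g x) (vsub y x) <= f y - f x.
Proof.
  intros Hg Hc x y. set (w := vsub y x). set (nw := vnorm w).
  assert (Hnw : 0 <= nw) by apply vnorm_nonneg.
  apply Rle_plus_epsilon. intros eps Heps.
  destruct (Hg x (eps / (nw + 1))) as [delta [Hd Hh]]. { apply Rdiv_lt_0_compat; lra. }
  set (t := Rmin 1 (delta / (2 * (nw + 1)))).
  assert (Ht0 : 0 < t). { unfold t. apply Rmin_glb_lt; [lra|]. apply Rdiv_lt_0_compat; lra. }
  assert (Ht1 : t <= 1) by apply Rmin_l.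
  assert (Htd : t * nw < delta).
  { assert (t <= delta / (2 * (nw + 1))) by apply Rmin_r.
    apply Rle_lt_trans with (delta / (2 * (nw+1)) * nw). { apply Rmult_le_compat_r; lra. }
    apply Rlt_le_trans with (delta / (2 * (nw+1)) * (2 * (nw + 1))). { apply Rmult_lt_compat_l; [apply Rdiv_lt_0_compat; lra| lra]. }
    right. field. lra. }
  specialize (Hh (vscale t w)). rewrite vnorm_scale, Rabs_pos_eq in Hh by lra.
  specialize (Hh Htd). rewrite dot_scaler in Hh.
  pose proof (Hc y x t (conj (Rlt_le _ _ Ht0) Ht1)) as Hcv.
  replace (vadd (vscale t y) (vscale (1 - t) x)) with (vadd x (vscale t w)) in Hcv
    by (unfold w; vext).
  apply abs_le_between in Hh. fold nw in Hh.
  assert (Hk : t * dot (g x) w <= t * (f y - f x) + t * (eps / (nw + 1) * nw)) by nra.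
  assert (dot (g x) w <= f y - f x + eps / (nw + 1) * nw).
  { apply Rmult_le_reg_l with t; lra. }
  assert (eps / (nw + 1) * nw <= eps).
  { unfold Rdiv. rewrite Rmult_assoc. rewrite <- (Rmult_1_r eps) at 2. apply Rmult_le_compat_l; [lra|].
    apply Rmult_le_reg_l with (nw + 1); [lra|]. rewrite <- Rmult_assoc, Rinv_r; lra. }
  lra.
Qed.

Lemma derivable_lim_val f x l l' : derivable_pt_lim f x l -> l = l' -> derivable_pt_lim f x l'.
Proof. intros H E; subst; exact H. Qed.

Lemma descent n (f : vec n -> R) g L : has_gradient f g ->
  (forall x y, vnorm (vsub (g x) (g y)) <= L * vnorm (vsub x y)) -> 0 < L ->
  forall x d, f (vadd x d) <= f x + dot (g x) d + L / 2 * dot d d.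
Proof.
  intros Hg HL HL0 x d.
  set (D := dot d d). set (nd := vnorm d). assert (Hnd : 0 <= nd) by apply vnorm_nonneg.
  set (phi := fun t => f (vadd x (vscale t d))).
  assert (Hphi : forall t, derivable_pt_lim phi t (dot (g (vadd x (vscale t d))) d)).
  { intros t eps Heps. set (y := vadd x (vscale t d)).
    destruct (Hg y (eps / (2 * (nd + 1)))) as [delta [Hd Hh]]. { apply Rdiv_lt_0_compat; lra. }
    assert (Hdp : 0 < delta / (nd + 1)) by (apply Rdiv_lt_0_compat; lra).
    exists (mkposreal _ Hdp). intros h Hh0 Hhd. simpl in Hhd.
    specialize (Hh (vscale h d)). rewrite vnorm_scale in Hh. fold nd in Hh.
    assert (Habs : 0 < Rabs h) by (apply Rabs_pos_lt; auto).
    assert (Rabs h * nd < delta).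
    { apply Rle_lt_trans with (Rabs h * (nd + 1)); [nra|].
      apply Rmult_lt_reg_r with (/ (nd + 1)). { apply Rinv_0_lt_compat; lra. }
      rewrite Rmult_assoc, Rinv_r by lra. lra. }
    specialize (Hh H). unfold phi.
    replace (vadd x (vscale (t + h) d)) with (vadd y (vscale h d)) by (unfold y; vext).
    fold y. rewrite dot_scaler in Hh.
    replace ((f (vadd y (vscale h d)) - f y) / h - dot (g y) d)
      with ((f (vadd y (vscale h d)) - f y - h * dot (g y) d) / h) by (field; auto).
    unfold Rdiv at 1. rewrite Rabs_mult, Rabs_inv.
    apply Rle_lt_trans with (eps / (2 * (nd + 1)) * (Rabs h * nd) * / Rabs h).
    { apply Rmult_le_compat_r; [left; apply Rinv_0_lt_compat; auto|]. lra. }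
    replace (eps / (2 * (nd + 1)) * (Rabs h * nd) * / Rabs h) with (eps * nd / (2 * (nd + 1))) by (field; lra).
    apply Rmult_lt_reg_r with (2 * (nd + 1)); [lra|]. unfold Rdiv. rewrite Rmult_assoc, Rinv_l by lra. nra. }
  set (psi := fun t => phi t - t * dot (g x) d - L / 2 * (t * t) * D).
  set (psi' := fun t => dot (g (vadd x (vscale t d))) d - dot (g x) d - L / 2 * (2 * t) * D).
  assert (Hpsi : forall t, derivable_pt_lim psi t (psi' t)).
  { intro t.
    eapply derivable_lim_val.
    - change psi with (minus_fct (minus_fct phi (mult_fct id (fct_cte (dot (g x) d))))
       (mult_fct (mult_real_fct (L/2) (mult_fct id id)) (fct_cte D))).
      apply derivable_pt_lim_minus; [apply derivable_pt_lim_minus|apply derivable_pt_lim_mult].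
      + apply Hphi.
      + apply derivable_pt_lim_mult; [apply derivable_pt_lim_id|apply derivable_pt_lim_const].
      + apply derivable_pt_lim_scal. apply derivable_pt_lim_mult; apply derivable_pt_lim_id.
      + apply derivable_pt_lim_const.
    - unfold psi', id, fct_cte, mult_real_fct, mult_fct. ring. }
  set (pr := fun t => exist (fun l => derivable_pt_lim psi t l) (psi' t) (Hpsi t) : derivable_pt psi t).
  destruct (MVT_cor1 psi 0 1 pr Rlt_0_1) as [c [Hc Hc01]].
  simpl in Hc. unfold psi' in Hc.
  assert (Hle : dot (g (vadd x (vscale c d))) d - dot (g x) d <= L * c * D).
  { rewrite <- dot_subl. eapply Rle_trans; [apply cauchy_schwarz|].
    eapply Rle_trans. { apply Rmult_le_compat_r; [apply vnorm_nonneg|apply HL]. }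
    replace (vsub (vadd x (vscale c d)) x) with (vscale c d) by vext.
    rewrite vnorm_scale, Rabs_pos_eq by lra. fold nd.
    unfold D. rewrite <- vnorm_sq. fold nd. right; ring. }
  unfold psi, phi in Hc.
  replace (vadd x (vscale 1 d)) with (vadd x d) in Hc by vext.
  replace (vadd x (vscale 0 d)) with x in Hc by vext.
  fold D. nra.
Qed.

Definition Qset {n} (dom : vec n -> Prop) g psi x (H : mat n) :=
  fun r => exists e, dom (vadd x e) /\ r = Qv g psi x H e.

Lemma Qs_le0 n (dom : vec n -> Prop) g psi x H Qs :
  is_glb (Qset dom g psi x H) Qs -> dom x -> Qs <= 0.
Proof.
  intros [Hlb _] Hx. replace 0 with (Qv g psi x H (vscale 0 x)).
  - apply Hlb. exists (vscale 0 x). split; [|reflexivity].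
    replace (vadd x (vscale 0 x)) with x by vext. exact Hx.
  - unfold Qv. rewrite dot_scaler, quad_scale.
    replace (vadd x (vscale 0 x)) with x by vext. ring.
Qed.

Lemma Qs_seg n (dom : vec n -> Prop) g psi x H Qs d t :
  ext_convex dom psi -> is_glb (Qset dom g psi x H) Qs -> dom x -> dom (vadd x d) -> 0 <= t <= 1 ->
  Qs <= t * (Qv g psi x H d - / 2 * quad H d) + t ^ 2 / 2 * quad H d.
Proof.
  intros [Hcs Hcv] [Hlb _] Hx Hxd Ht.
  assert (E : vadd (vscale t (vadd x d)) (vscale (1 - t) x) = vadd x (vscale t d)) by vext.
  assert (Hd : dom (vadd x (vscale t d))) by (rewrite <- E; apply Hcs; auto).
  apply Rle_trans with (Qv g psi x H (vscale t d)).
  { apply Hlb. exists (vscale t d). auto. }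
  pose proof (Hcv _ _ t Hxd Hx Ht) as Hp. rewrite E in Hp.
  unfold Qv. rewrite dot_scaler, quad_scale. nra.
Qed.

Lemma Qs_omega n (dom : vec n -> Prop) f g psi Fs x y H Qs lam :
  has_gradient f g -> convex_fun f -> ext_convex dom psi ->
  is_glb (Qset dom g psi x H) Qs -> dom x -> Omega dom f psi Fs y -> 0 <= lam <= 1 ->
  Qs <= - lam * (Fv f psi x - Fs) + lam ^ 2 / 2 * quad H (vsub x y).
Proof.
  intros Hg Hf [Hcs Hcv] [Hlb _] Hx [Hy HFy] Hl.
  set (w := vsub y x).
  assert (E : vadd (vscale lam y) (vscale (1 - lam) x) = vadd x (vscale lam w)) by (unfold w; vext).
  assert (Hd : dom (vadd x (vscale lam w))) by (rewrite <- E; apply Hcs; auto).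
  apply Rle_trans with (Qv g psi x H (vscale lam w)).
  { apply Hlb. exists (vscale lam w). auto. }
  pose proof (Hcv _ _ lam Hy Hx Hl) as Hp. rewrite E in Hp.
  pose proof (grad_ineq _ f g Hg Hf x y) as Hgi. fold w in Hgi.
  assert (Eq : quad H w = quad H (vsub x y)).
  { replace w with (vscale (-1) (vsub x y)) by (unfold w; vext). rewrite quad_scale. ring. }
  unfold Qv. rewrite dot_scaler, quad_scale, Eq. unfold Fv in *. nra.
Qed.

Lemma accept_ok n (dom : vec n -> Prop) f g psi L gamma eta x H d mu :
  has_gradient f g -> (forall x y, vnorm (vsub (g x) (g y)) <= L * vnorm (vsub x y)) -> 0 < L ->
  ext_convex dom psi -> 0 < gamma <= 1 -> 0 <= eta < 1 -> dom x ->
  (forall v, mu * dot v v <= quad H v) ->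
  L * (1 + sqrt eta) / (2 - gamma * (1 - sqrt eta)) <= mu ->
  inexact dom g psi x H eta d -> accept f psi g gamma x H d.
Proof.
  intros Hg HL HL0 Hcvx Hga Het Hx Hmu Hc [Hxd [Qs [Hglb HQ]]].
  set (s := sqrt eta).
  assert (Hs0 : 0 <= s) by apply sqrt_pos.
  assert (Hs1 : s < 1).
  { unfold s. rewrite <- sqrt_1. apply sqrt_lt_1; lra. }
  assert (Hss : s * s = eta) by (apply sqrt_sqrt; lra).
  fold s in Hc.
  assert (Hden : 0 < 2 - gamma * (1 - s)) by nra.
  assert (Hc' : L * (1 + s) <= mu * (2 - gamma * (1 - s))).
  { apply Rmult_le_compat_r with (r := 2 - gamma * (1 - s)) in Hc; [|lra].
    unfold Rdiv in Hc. rewrite Rmult_assoc, Rinv_l in Hc by lra. lra. }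
  assert (Hmup : 0 < mu) by nra.
  assert (HQs0 := Qs_le0 _ dom g psi x H Qs Hglb Hx).
  set (a := - Qv g psi x H d). set (p := / 2 * quad H d).
  assert (HD : mu * dot d d <= 2 * p) by (unfold p; specialize (Hmu d); lra).
  assert (HDn := dot_nonneg _ d).
  assert (Hp0 : 0 <= p) by nra.
  assert (Ha : (1 - eta) * (- Qs) <= a) by (unfold a; lra).
  assert (Ha0 : 0 <= a) by nra.
  assert (Hseg : forall t, 0 <= t <= 1 -> t * (a + p) - t ^ 2 * p <= - Qs).
  { intros t Ht. pose proof (Qs_seg _ dom g psi x H Qs d t Hcvx Hglb Hx Hxd Ht). unfold a, p in *. lra. }
  assert (Hkey : (1 - s) * p <= (1 + s) * a).
  { destruct (Rle_dec p a) as [Hpa|Hpa]; [nra|].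
    assert (Hpp : 0 < p) by lra.
    set (t := (a + p) / (2 * p)).
    assert (Ht : 0 <= t <= 1).
    { unfold t. split.
      - apply Rmult_le_pos; [lra|left; apply Rinv_0_lt_compat; lra].
      - apply Rmult_le_reg_r with (2 * p); [lra|]. unfold Rdiv. rewrite Rmult_assoc, Rinv_l by lra. lra. }
    specialize (Hseg t Ht).
    assert (E : t * (a + p) - t ^ 2 * p = (a + p) ^ 2 / (4 * p)) by (unfold t; field; lra).
    rewrite E in Hseg.
    assert (H4 : (a + p) ^ 2 <= 4 * p * (- Qs)).
    { apply Rmult_le_compat_r with (r := 4 * p) in Hseg; [|lra].
      unfold Rdiv in Hseg. rewrite Rmult_assoc, Rinv_l in Hseg by lra. lra. }
    assert (H5 : (1 - eta) * (a + p) ^ 2 <= 4 * p * a) by nra.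
    rewrite <- Hss in H5.
    assert (Hprod : ((1 - s) * p - (1 + s) * a) * ((1 + s) * p - (1 - s) * a) <= 0) by nra.
    assert (0 < (1 + s) * p - (1 - s) * a) by nra.
    nra. }
  pose proof (descent _ f g L Hg HL HL0 x d) as Hdesc.
  assert (Hfin : mu * (1 - gamma) * a + p * (mu - L) >= 0).
  { destruct (Rle_dec L mu).
    { assert (0 <= mu * (1 - gamma)) by nra. assert (0 <= mu * (1 - gamma) * a) by nra.
      assert (0 <= p * (mu - L)) by nra. lra. }
    assert (H1 : p * (L - mu) * (1 + s) <= p * mu * (1 - s) * (1 - gamma)) by nra.
    assert (H2 : p * mu * (1 - s) * (1 - gamma) <= (1 + s) * a * mu * (1 - gamma)).
    { assert (0 <= mu * (1 - gamma)) by nra. nra. }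
    nra. }
  assert (HLD : L / 2 * dot d d <= L / mu * p).
  { apply Rmult_le_reg_l with mu; [lra|].
    replace (mu * (L / 2 * dot d d)) with (L / 2 * (mu * dot d d)) by ring.
    replace (mu * (L / mu * p)) with (L * p) by (field; lra). nra. }
  assert (Hfin2 : (1 - gamma) * a + p - L / mu * p >= 0).
  { assert (E : mu * ((1 - gamma) * a + p - L / mu * p) = mu * (1 - gamma) * a + p * (mu - L)) by (field; lra).
    destruct (Rlt_le_dec ((1 - gamma) * a + p - L / mu * p) 0) as [Hn|]; [|lra].
    assert (mu * ((1 - gamma) * a + p - L / mu * p) < 0) by (apply Rmult_pos_neg; lra). lra. }
  unfold accept, Fv. unfold a, p, Qv in *. split; nra.
Qed.

Definition concl_abs (e q alpha : nat -> R) (Fs R0 M gamma eta : R) : Prop :=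
  (forall k, q k <= e k - Fs -> e (S k) - Fs <= (1 - (1 - eta) * gamma * alpha k / 2) * (e k - Fs)) /\
  (forall k0 : nat, e k0 - Fs < M * R0 ^ 2 ->
     (forall j, (j < k0)%nat -> ~ (e j - Fs < M * R0 ^ 2)) ->
     (forall k, (k0 <= k)%nat ->
        e k - Fs <= 2 * M * R0 ^ 2 / (gamma * (1 - eta) * rsum alpha k0 (k - k0) + 2)) /\
     (forall abar, 0 < abar -> (forall k, abar <= alpha k) ->
        INR k0 <= Rmax 0 (1 + 2 / (gamma * (1 - eta) * abar)
                              * ln ((e O - Fs) / (M * R0 ^ 2))))).

Lemma rsum_nonneg a m len : (forall k, 0 <= a k) -> 0 <= rsum a m len.
Proof. intro H. induction len; simpl; [lra|]. specialize (H (m + len)%nat). lra. Qed.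

Lemma step_alg B c dl dl' u : 0 < B -> 0 <= c <= 1 -> 2 <= u -> 0 <= dl -> dl <= 2 * B / u ->
  dl' <= dl - c * dl ^ 2 / (2 * B) -> dl' <= 2 * B / (u + c).
Proof.
  intros HB Hc Hu Hd HdD Hd'.
  set (D := 2 * B / u) in *.
  assert (HD : D * u = 2 * B) by (unfold D; field; lra).
  assert (HDB : D <= B) by nra.
  assert (H1 : dl - c * dl ^ 2 / (2 * B) <= D - c * D ^ 2 / (2 * B)).
  { assert (E : (D - c * D ^ 2 / (2 * B)) - (dl - c * dl ^ 2 / (2 * B))
              = (D - dl) * (1 - c * (D + dl) / (2 * B))) by (field; lra).
    assert (0 <= 1 - c * (D + dl) / (2 * B)).
    { assert (c * (D + dl) <= 2 * B) by nra.
      assert (c * (D + dl) / (2 * B) <= 1).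
      { apply Rmult_le_reg_r with (2 * B); [lra|]. unfold Rdiv. rewrite Rmult_assoc, Rinv_l by lra. lra. }
      lra. }
    assert (0 <= (D - dl) * (1 - c * (D + dl) / (2 * B))) by (apply Rmult_le_pos; lra). lra. }
  assert (H2 : D - c * D ^ 2 / (2 * B) <= 2 * B / (u + c)).
  { assert (E : D - c * D ^ 2 / (2 * B) = 2 * B * (u - c) / (u * u)) by (unfold D; field; lra).
    rewrite E. apply Rmult_le_reg_r with (u * u * (u + c)); [nra|].
    replace (2 * B * (u - c) / (u * u) * (u * u * (u + c))) with (2 * B * (u - c) * (u + c)) by (field; lra).
    replace (2 * B / (u + c) * (u * u * (u + c))) with (2 * B * (u * u)) by (field; lra). nra. }
  lra.
Qed.

Lemma abstract_concl (e q alpha : nat -> R) (Fs R0 M gamma eta : R) :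
  0 < gamma <= 1 -> 0 <= eta < 1 -> (forall k, 0 < alpha k <= 1) -> 0 < M -> 0 < R0 ->
  (forall k, Fs <= e k) ->
  (forall k, e k <= e O -> q k <= M * R0 ^ 2) ->
  (forall k lam, 0 <= lam <= 1 -> e (S k) - Fs <= (e k - Fs)
       + gamma * alpha k * (1 - eta) * (- lam * (e k - Fs) + lam ^ 2 / 2 * q k)) ->
  concl_abs e q alpha Fs R0 M gamma eta.
Proof.
  intros Hg He Ha HM HR Hlow Hq Hrec.
  set (B := M * R0 ^ 2).
  assert (HB : 0 < B) by (unfold B; apply Rmult_lt_0_compat; [lra|apply pow_lt; lra]).
  assert (Hcoef : forall k, 0 <= gamma * alpha k * (1 - eta)).
  { intro k. specialize (Ha k). apply Rmult_le_pos; [apply Rmult_le_pos|]; lra. }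
  assert (Hmono : forall k, e (S k) <= e k).
  { intro k. specialize (Hrec k 0 ltac:(lra)). lra. }
  assert (H0 : forall k, e k <= e O).
  { induction k; [lra|]. specialize (Hmono k). lra. }
  assert (HqB : forall k, q k <= B) by (intro; apply Hq, H0).
  assert (P1 : forall k, q k <= e k - Fs -> e (S k) - Fs <= (1 - (1 - eta) * gamma * alpha k / 2) * (e k - Fs)).
  { intros k Hk. specialize (Hrec k 1 ltac:(lra)). specialize (Hcoef k).
    assert (gamma * alpha k * (1 - eta) * (- 1 * (e k - Fs) + 1 ^ 2 / 2 * q k)
            <= gamma * alpha k * (1 - eta) * (- (e k - Fs) / 2)).
    { apply Rmult_le_compat_l; [lra|]. lra. }
    lra. }
  split; [exact P1|].
  intros k0 Hk0 Hbefore. split.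
  - assert (Claim : forall j, e (k0 + j)%nat - Fs <= 2 * B / (gamma * (1 - eta) * rsum alpha k0 j + 2)).
    { induction j as [|j IH].
      - rewrite Nat.add_0_r. simpl. replace (2 * B / (gamma * (1 - eta) * 0 + 2)) with B by (field).
        fold B in Hk0. lra.
      - rewrite Nat.add_succ_r. simpl rsum.
        set (S0 := rsum alpha k0 j) in *.
        assert (HS0 : 0 <= S0) by (apply rsum_nonneg; intro; specialize (Ha k); lra).
        set (k := (k0 + j)%nat) in *.
        set (u := gamma * (1 - eta) * S0 + 2).
        assert (Hu : 2 <= u) by (unfold u; assert (0 <= gamma * (1 - eta) * S0) by (apply Rmult_le_pos; [apply Rmult_le_pos|]; lra); lra).
        set (c := gamma * (1 - eta) * alpha k).
        assert (Hc : 0 <= c <= 1).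
        { unfold c. specialize (Ha k). split; [apply Rmult_le_pos; [apply Rmult_le_pos|]; lra|].
          assert (gamma * (1 - eta) <= 1) by nra. nra. }
        replace (gamma * (1 - eta) * (S0 + alpha k) + 2) with (u + c) by (unfold u, c; ring).
        set (dl := e k - Fs).
        assert (Hdl0 : 0 <= dl) by (unfold dl; specialize (Hlow k); lra).
        assert (HdD : dl <= 2 * B / u) by exact IH.
        assert (HdB : dl <= B).
        { apply Rle_trans with (2 * B / u); [exact HdD|].
          apply Rmult_le_reg_r with u; [lra|]. unfold Rdiv. rewrite Rmult_assoc, Rinv_l by lra. nra. }
        apply step_alg with (dl := dl); auto.
        specialize (Hrec k (dl / B)).
        assert (Hlam : 0 <= dl / B <= 1).
        { split; [apply Rmult_le_pos; [lra|left; apply Rinv_0_lt_compat; lra]|].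
          apply Rmult_le_reg_r with B; [lra|]. unfold Rdiv. rewrite Rmult_assoc, Rinv_l by lra. lra. }
        specialize (Hrec Hlam). fold dl in Hrec.
        assert (Hin : - (dl / B) * dl + (dl / B) ^ 2 / 2 * q k <= - dl ^ 2 / (2 * B)).
        { assert ((dl / B) ^ 2 / 2 * q k <= (dl / B) ^ 2 / 2 * B).
          { apply Rmult_le_compat_l; [|apply HqB]. assert (0 <= (dl/B)^2) by apply pow2_ge_0. lra. }
          replace (- dl ^ 2 / (2 * B)) with (- (dl / B) * dl + (dl / B) ^ 2 / 2 * B) by (field; lra). lra. }
        assert (gamma * alpha k * (1 - eta) * (- (dl / B) * dl + (dl / B) ^ 2 / 2 * q k)
                <= gamma * alpha k * (1 - eta) * (- dl ^ 2 / (2 * B))) by (apply Rmult_le_compat_l; [apply Hcoef|exact Hin]).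
        replace (dl - c * dl ^ 2 / (2 * B)) with (dl + gamma * alpha k * (1 - eta) * (- dl ^ 2 / (2 * B)))
          by (unfold c; field; lra).
        lra. }
    intros k Hk. replace (e k) with (e (k0 + (k - k0))%nat) by (f_equal; lia).
    fold B. replace (2 * B) with (2 * M * R0 ^ 2) by (unfold B; ring). 
    replace (2 * M * R0 ^ 2) with (2 * B) by (unfold B; ring). apply Claim.
  - intros abar Hab Hal.
    destruct k0 as [|m].
    { simpl. apply Rmax_l. }
    set (rho := (1 - eta) * gamma * abar / 2).
    assert (Hab1 : abar <= 1) by (specialize (Hal O); specialize (Ha O); lra).
    assert (Hrho : 0 < rho) by (unfold rho; apply Rmult_lt_0_compat; [apply Rmult_lt_0_compat; [apply Rmult_lt_0_compat|]|]; lra).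
    assert (Hrho1 : rho <= 1 / 2) by (unfold rho; assert ((1 - eta) * gamma <= 1) by nra; nra).
    assert (Hexp : forall j, (j <= m)%nat -> e j - Fs <= exp (- rho * INR j) * (e O - Fs)).
    { induction j as [|j IH]; intro Hj.
      - simpl. rewrite Rmult_0_r, exp_0. lra.
      - assert (Hjm : (j <= m)%nat) by lia. specialize (IH Hjm).
        assert (HjB : B <= e j - Fs).
        { assert (~ (e j - Fs < B)) by (apply Hbefore; lia). lra. }
        specialize (P1 j ltac:(specialize (HqB j); lra)).
        assert (Hrr : (1 - (1 - eta) * gamma * alpha j / 2) <= 1 - rho).
        { unfold rho. specialize (Hal j). assert (0 <= (1 - eta) * gamma) by nra. nra. }
        assert (Hx : 1 - rho <= exp (- rho)) by (pose proof (exp_ineq1 (- rho) ltac:(lra)); lra).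
        assert (Hdj : 0 <= e j - Fs) by (specialize (Hlow j); lra).
        rewrite S_INR. replace (- rho * (INR j + 1)) with (- rho * INR j + - rho) by ring.
        rewrite exp_plus.
        assert (0 <= 1 - rho) by lra.
        apply Rle_trans with ((1 - rho) * (e j - Fs)). { eapply Rle_trans; [exact P1|]. apply Rmult_le_compat_r; lra. }
        apply Rle_trans with (exp (- rho) * (exp (- rho * INR j) * (e O - Fs))).
        { apply Rmult_le_compat; lra. }
        right; ring. }
    specialize (Hexp m (le_n m)).
    assert (HmB : B <= e m - Fs).
    { assert (~ (e m - Fs < B)) by (apply Hbefore; lia). lra. }
    set (d0 := e O - Fs) in *.
    assert (Hd0 : 0 < d0).
    { assert (0 < exp (- rho * INR m) * d0) by lra.
      destruct (Rle_lt_dec d0 0) as [Hn|]; [|lra].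
      pose proof (exp_pos (- rho * INR m)). nra. }
    assert (Hq0 : exp (rho * INR m) <= d0 / B).
    { assert (E : exp (rho * INR m) * exp (- rho * INR m) = 1).
      { rewrite <- exp_plus. replace (rho * INR m + - rho * INR m) with 0 by ring. apply exp_0. }
      pose proof (exp_pos (rho * INR m)).
      apply Rmult_le_reg_r with B; [lra|]. unfold Rdiv. rewrite Rmult_assoc, Rinv_l by lra.
      rewrite Rmult_1_r.
      assert (exp (rho * INR m) * B <= exp (rho * INR m) * (exp (- rho * INR m) * d0)) by (apply Rmult_le_compat_l; lra).
      rewrite <- Rmult_assoc, E in H1. lra. }
    assert (Hln : rho * INR m <= ln (d0 / B)).
    { rewrite <- (ln_exp (rho * INR m)). destruct Hq0 as [Hlt|Heq].
      - left. apply ln_increasing; [apply exp_pos|exact Hlt].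
      - rewrite Heq. lra. }
    eapply Rle_trans; [|apply Rmax_r].
    rewrite S_INR.
    replace (2 / (gamma * (1 - eta) * abar)) with (/ rho) by (unfold rho; field; repeat split; lra).
    fold B. fold d0.
    assert (INR m <= / rho * ln (d0 / B)).
    { apply Rmult_le_reg_l with rho; [lra|]. rewrite <- Rmult_assoc, Rinv_r by lra. lra. }
    lra.
Qed.

Lemma pow_le1 b i : 0 <= b <= 1 -> b ^ i <= 1.
Proof. intro H. induction i; simpl; [lra|]. assert (0 <= b ^ i) by (apply pow_le; lra). nra. Qed.

Lemma quad_bound_spec n (H : mat n) M v : spec_norm_le H M -> quad H v <= M * dot v v.
Proof.
  intro HS. unfold quad. eapply Rle_trans; [apply cauchy_schwarz|].
  rewrite <- vnorm_sq. specialize (HS v).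
  assert (0 <= vnorm v) by apply vnorm_nonneg. simpl. nra.
Qed.

Lemma alg1_part n (f : vec n -> R) g L dom psi Fs P :
  assumption1 f g L dom psi Fs -> convex_fun f -> is_projection (Omega dom f psi Fs) P ->
  forall (beta gamma eta R0 M : R) (x : nat -> vec n) (H : nat -> mat n)
          (d : nat -> vec n) (alpha : nat -> R),
     alg1_run dom f psi g beta gamma eta x H d alpha ->
     assumption2 dom f psi P (x O) H R0 M ->
     (forall k, psd (H k)) ->
     conclusions f psi P Fs R0 M gamma eta x H alpha.
Proof.
  intros [HL0 [Hg [HLip [Hcvx [Hprop [Hcl [Hbnd [HFs HOm]]]]]]]] Hf Hproj
    beta gamma eta R0 M x H d alpha [Hb [Hga [Het [Hx0 Hk]]]] [HR0 [HM [Hlub HHn]]] Hpsd.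
  assert (Hdom : forall k, dom (x k)).
  { induction k; [exact Hx0|].
    destruct (Hk k) as [_ [_ [_ [[i [Hai [[Hdom _] _]]] Hxs]]]].
    rewrite Hxs, Hai. exact Hdom. }
  assert (Halpha : forall k, 0 < alpha k <= 1).
  { intro k. destruct (Hk k) as [_ [_ [_ [[i [Hai _]] _]]]]. rewrite Hai.
    split; [apply pow_lt; lra|apply pow_le1; lra]. }
  change (concl_abs (fun k => Fv f psi (x k)) (fun k => quad (H k) (vsub (x k) (P (x k))))
            alpha Fs R0 M gamma eta).
  apply abstract_concl; auto; try lra.
  - intro k. destruct HFs as [Hlow _]. apply Hlow. exists (x k). auto.
  - intros k Hk0. eapply Rle_trans; [apply quad_bound_spec, HHn|].
    apply Rmult_le_compat_l; [lra|].
    destruct Hlub as [Hub _].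
    assert (Hv : vnorm (vsub (x k) (P (x k))) <= R0).
    { apply Hub. exists (x k). repeat split; auto. }
    rewrite <- vnorm_sq. pose proof (vnorm_nonneg _ (vsub (x k) (P (x k)))). simpl. nra.
  - intros k lam Hlam.
    destruct (Hk k) as [_ [_ [[Hxd [Qs [Hglb HQ]]] [[i [Hai [[Hdm Harm] _]]] Hxs]]]].
    rewrite Hxs. rewrite <- Hai in Harm, Hdm.
    pose proof (Qs_omega _ dom f g psi Fs (x k) (P (x k)) (H k) Qs lam Hg Hf Hcvx Hglb (Hdom k) (proj1 (Hproj (x k))) Hlam) as HQo.
    assert (Hq0 := Hpsd k (d k)).
    assert (HDelta : dot (g (x k)) (d k) + psi (vadd (x k) (d k)) - psi (x k) <= Qv g psi (x k) (H k) (d k)).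
    { unfold Qv. lra. }
    specialize (Halpha k).
    assert (Hag : 0 <= alpha k * gamma) by (apply Rmult_le_pos; lra).
    assert (H1 : alpha k * gamma * (dot (g (x k)) (d k) + psi (vadd (x k) (d k)) - psi (x k))
                 <= alpha k * gamma * ((1 - eta) * Qs)) by (apply Rmult_le_compat_l; lra).
    assert (H2 : alpha k * gamma * ((1 - eta) * Qs)
                 <= alpha k * gamma * ((1 - eta) * (- lam * (Fv f psi (x k) - Fs) + lam ^ 2 / 2 * quad (H k) (vsub (x k) (P (x k))))))
      by (apply Rmult_le_compat_l; [lra|]; apply Rmult_le_compat_l; lra).
    lra.
Qed.

Lemma alg2_generic n (f : vec n -> R) g L dom psi Fs P trial (variant1 : bool)
    beta gamma eta R0 M Mt (x : nat -> vec n) (H0 H : nat -> mat n) (d : nat -> vec n) :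
  assumption1 f g L dom psi Fs -> convex_fun f -> is_projection (Omega dom f psi Fs) P ->
  alg2_run trial variant1 dom f psi g beta gamma eta x H0 H d ->
  assumption2 dom f psi P (x O) H R0 M ->
  (forall k, psd (H k)) -> 0 < Mt ->
  (forall k, dom (x k) -> forall v, quad (H k) v <= Mt * dot v v) ->
  conclusions f psi P Fs R0 Mt gamma eta x H (fun _ => 1).
Proof.
  intros [HL0 [Hg [HLip [Hcvx [Hprop [Hcl [Hbnd [HFs HOm]]]]]]]] Hf Hproj
    [Hb [Hga [Het [Hx0 Hk]]]] [HR0 [HM [Hlub HHn]]] Hpsd HMt Hbound.
  assert (Hdom : forall k, dom (x k)).
  { induction k; [exact Hx0|].
    destruct (Hk k) as [_ [_ [ik [dt [Hinex [_ [_ [_ [Hdk Hxs]]]]]]]]].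
    rewrite Hxs, Hdk. exact (proj1 (Hinex ik (le_n ik))). }
  change (concl_abs (fun k => Fv f psi (x k)) (fun k => quad (H k) (vsub (x k) (P (x k))))
            (fun _ => 1) Fs R0 Mt gamma eta).
  apply abstract_concl; auto; try lra.
  - intro k. lra.
  - intro k. destruct HFs as [Hlow _]. apply Hlow. exists (x k). auto.
  - intros k Hk0. eapply Rle_trans; [apply Hbound, Hdom|].
    apply Rmult_le_compat_l; [lra|].
    destruct Hlub as [Hub _].
    assert (Hv : vnorm (vsub (x k) (P (x k))) <= R0).
    { apply Hub. exists (x k). repeat split; auto. }
    rewrite <- vnorm_sq. pose proof (vnorm_nonneg _ (vsub (x k) (P (x k)))). simpl. nra.
  - intros k lam Hlam.
    destruct (Hk k) as [_ [_ [ik [dt [Hinex [_ [Hacc [HHk [Hdk Hxs]]]]]]]]].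
    destruct (Hinex ik (le_n ik)) as [Hxd [Qs [Hglb HQ]]].
    rewrite <- HHk in Hglb, HQ, Hacc. rewrite <- Hdk in Hxd, HQ, Hacc.
    rewrite Hxs.
    pose proof (Qs_omega _ dom f g psi Fs (x k) (P (x k)) (H k) Qs lam Hg Hf Hcvx Hglb (Hdom k) (proj1 (Hproj (x k))) Hlam) as HQo.
    destruct Hacc as [Hacc _].
    assert (H1 : gamma * Qv g psi (x k) (H k) (d k) <= gamma * ((1 - eta) * Qs)) by (apply Rmult_le_compat_l; lra).
    assert (H2 : gamma * ((1 - eta) * Qs)
                 <= gamma * ((1 - eta) * (- lam * (Fv f psi (x k) - Fs) + lam ^ 2 / 2 * quad (H k) (vsub (x k) (P (x k))))))
      by (apply Rmult_le_compat_l; [lra|]; apply Rmult_le_compat_l; lra).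
    lra.
Qed.

Lemma c_pos L gamma eta : 0 < L -> 0 < gamma <= 1 -> 0 <= eta < 1 ->
  0 < 2 - gamma * (1 - sqrt eta) /\ 0 < L * (1 + sqrt eta) / (2 - gamma * (1 - sqrt eta)).
Proof.
  intros HL Hg He. assert (0 <= sqrt eta) by apply sqrt_pos.
  assert (sqrt eta < 1) by (rewrite <- sqrt_1; apply sqrt_lt_1; lra).
  assert (0 < 2 - gamma * (1 - sqrt eta)) by nra. split; [lra|].
  apply Rdiv_lt_0_compat; nra.
Qed.

Theorem theorem1 (n : nat) (f : vec n -> R) (g : vec n -> vec n) (L : R)
    (dom : vec n -> Prop) (psi : vec n -> R) (Fs : R) (P : vec n -> vec n) :
  assumption1 f g L dom psi Fs ->
  convex_fun f ->
  is_projection (Omega dom f psi Fs) P ->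
  (* Algorithm 1 *)
  (forall (beta gamma eta R0 M : R) (x : nat -> vec n) (H : nat -> mat n)
          (d : nat -> vec n) (alpha : nat -> R),
     alg1_run dom f psi g beta gamma eta x H d alpha ->
     assumption2 dom f psi P (x O) H R0 M ->
     (forall k, psd (H k)) ->
     conclusions f psi P Fs R0 M gamma eta x H alpha) /\
  (* Algorithm 2, Variant 1 *)
  (forall (beta gamma eta R0 M m0 M0 : R) (x : nat -> vec n) (H0 H : nat -> mat n)
          (d : nat -> vec n),
     alg2_run trialH_v1 true dom f psi g beta gamma eta x H0 H d ->
     0 < M0 -> 0 < m0 -> m0 <= M0 -> (forall k, loewner_between m0 M0 (H0 k)) ->
     assumption2 dom f psi P (x O) H R0 M ->
     (forall k, psd (H k)) ->
     conclusions f psi P Fs R0 (Mtilde1 M0 m0 L beta gamma eta) gamma eta x H (fun _ => 1)) /\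
  (* Algorithm 2, Variant 2 *)
  (forall (beta gamma eta R0 M m0 M0 : R) (x : nat -> vec n) (H0 H : nat -> mat n)
          (d : nat -> vec n),
     alg2_run trialH_v2 false dom f psi g beta gamma eta x H0 H d ->
     0 < M0 -> m0 <= M0 -> (forall k, loewner_between m0 M0 (H0 k)) ->
     assumption2 dom f psi P (x O) H R0 M ->
     (forall k, psd (H k)) ->
     conclusions f psi P Fs R0 (Mtilde2 M0 m0 L beta gamma eta) gamma eta x H (fun _ => 1)).
Proof.
  intros HA1 Hf Hproj. split; [|split].
  - eapply alg1_part; eauto.
  - intros beta gamma eta R0 M m0 M0 x H0 H d Hrun HM0 Hm0 Hmm Hlw HA2 Hpsd.
    pose proof HA1 as [HL0 [Hg [HLip [Hcvx _]]]].
    pose proof Hrun as [Hb [Hga [Het [Hx0 Hk]]]].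
    destruct (c_pos L gamma eta HL0 Hga Het) as [Hden Hc].
    set (c := L * (1 + sqrt eta) / (2 - gamma * (1 - sqrt eta))) in *.
    assert (HX : L * (1 + sqrt eta) / (beta * (2 - gamma * (1 - sqrt eta)) * m0) = c / (beta * m0))
      by (unfold c; field; repeat split; lra).
    assert (HMt : M0 <= Mtilde1 M0 m0 L beta gamma eta).
    { unfold Mtilde1. pose proof (Rmax_l 1 (L * (1 + sqrt eta) / (beta * (2 - gamma * (1 - sqrt eta)) * m0))). nra. }
    apply (alg2_generic n f g L dom psi Fs P trialH_v1 true beta gamma eta R0 M _ x H0 H d); auto; [lra|].
    intros k Hxk v.
    destruct (Hk k) as [_ [_ [ik [dt [Hinex [Hnacc [_ [HHk _]]]]]]]].
    rewrite HHk. unfold trialH_v1. rewrite quad_mscale.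
    destruct (Hlw k v) as [Hlo Hhi].
    assert (Hdv := dot_nonneg _ v).
    destruct ik as [|j].
    + simpl. rewrite Rinv_1. nra.
    + assert (Hbj : 0 < beta ^ j) by (apply pow_lt; lra).
      assert (Hnot : / beta ^ j * m0 < c).
      { destruct (Rlt_le_dec (/ beta ^ j * m0) c) as [|Hge]; [assumption|exfalso].
        apply (Hnacc j (Nat.lt_succ_diag_r j)).
        apply accept_ok with (dom := dom) (L := L) (eta := eta) (mu := / beta ^ j * m0); auto; try lra.
        1: { intro w. unfold trialH_v1. rewrite quad_mscale. destruct (Hlw k w) as [Hl _].
          assert (0 < / beta ^ j) by (apply Rinv_0_lt_compat; lra). nra. }
        all: apply Hinex; lia. }
      assert (Hinv : / beta ^ S j <= c / (beta * m0)).
      { simpl. rewrite Rinv_mult.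
        apply Rmult_le_reg_r with (beta * m0); [nra|].
        replace (c / (beta * m0) * (beta * m0)) with c by (field; lra).
        replace (/ beta * / beta ^ j * (beta * m0)) with (/ beta ^ j * m0) by (field; lra). lra. }
      assert (Hpos : 0 <= / beta ^ S j) by (left; apply Rinv_0_lt_compat, pow_lt; lra).
      unfold Mtilde1. rewrite HX.
      pose proof (Rmax_r 1 (c / (beta * m0))).
      apply Rle_trans with (/ beta ^ S j * (M0 * dot v v)); [apply Rmult_le_compat_l; lra|].
      assert (0 <= M0 * dot v v) by nra. nra.
  - intros beta gamma eta R0 M m0 M0 x H0 H d Hrun HM0 Hmm Hlw HA2 Hpsd.
    pose proof HA1 as [HL0 [Hg [HLip [Hcvx _]]]].
    pose proof Hrun as [Hb [Hga [Het [Hx0 Hk]]]].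
    destruct (c_pos L gamma eta HL0 Hga Het) as [Hden Hc].
    set (c := L * (1 + sqrt eta) / (2 - gamma * (1 - sqrt eta))) in *.
    set (X := / beta * (c - m0)).
    assert (HXm : 1 <= Rmax 1 X) by apply Rmax_l.
    change (Mtilde2 M0 m0 L beta gamma eta) with (M0 + Rmax 1 X).
    apply (alg2_generic n f g L dom psi Fs P trialH_v2 false beta gamma eta R0 M _ x H0 H d); auto; [lra|].
    intros k Hxk v.
    destruct (Hk k) as [_ [_ [ik [dt [Hinex [Hnacc [_ [HHk _]]]]]]]].
    rewrite HHk.
    destruct (Hlw k v) as [Hlo Hhi].
    assert (Hdv := dot_nonneg _ v).
    destruct ik as [|j].
    + simpl trialH_v2. nra.
    + change (trialH_v2 beta (H0 k) (S j)) with (madd (H0 k) (mscale (/ beta ^ j) (ident n))).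
      rewrite quad_madd, quad_mscale, quad_ident.
      assert (Hj : / beta ^ j <= Rmax 1 X).
      { destruct j as [|j'].
        - simpl. rewrite Rinv_1. lra.
        - assert (Hbj : 0 < beta ^ j') by (apply pow_lt; lra).
          assert (Hnot : m0 + / beta ^ j' < c).
          { destruct (Rlt_le_dec (m0 + / beta ^ j') c) as [|Hge]; [assumption|exfalso].
            apply (Hnacc (S j') (Nat.lt_succ_diag_r _)).
            apply accept_ok with (dom := dom) (L := L) (eta := eta) (mu := m0 + / beta ^ j'); auto; try lra.
            1: { intro w. change (trialH_v2 beta (H0 k) (S j')) with (madd (H0 k) (mscale (/ beta ^ j') (ident n))).
              rewrite quad_madd, quad_mscale, quad_ident. destruct (Hlw k w) as [Hl _]. lra. }
            all: apply Hinex; lia. }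
          eapply Rle_trans; [|apply Rmax_r]. unfold X. simpl. rewrite Rinv_mult.
          apply Rmult_le_compat_l; [left; apply Rinv_0_lt_compat; lra|]. lra. }
      nra.
Qed.
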